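(* Let $u^*:\Omega\to\mathbb{R}$, the sample points $\bm x_1,\dots,\bm x_{N_1}$, the affine functions $u_1,\dots,u_{N_1}$, the index sets $J_{\geq,i},J_{\leq,i}$ and the approximations $\hat f_{\mathrm{L,d}},\hat f_{\mathrm{L,c}}$ be as in the context (with $N_s=N_1$). Suppose every sample point $\bm x_i$ lies in the interior of its UO region $\Gamma(\bm x_i)$, and suppose $$\min_{j\in J_{\geq,i}}u_j(\bm x_k)\le u_k(\bm x_k)\quad\text{and}\quad \max_{j\in J_{\leq,i}}u_j(\bm x_k)\ge u_k(\bm x_k)\qquad\forall\, i,k\in\{1,\dots,N_1\}.$$ Then for every $i\in\{1,\dots,N_1\}$, $$\hat f_{\mathrm{L,d}}(\bm x)=u^*(\bm x)\quad\text{and}\quad \hat f_{\mathrm{L,c}}(\bm x)=u^*(\bm x)\qquad\forall\,\bm x\in\Gamma(\bm x_i).$$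
   Context: Let $\Omega\subseteq\mathbb{R}^{n_x}$ be a convex polyhedron (a hyperbox) and $u^*:\Omega\to\mathbb{R}$ a continuous piecewise affine (PWA) function: $\Omega$ is the union of finitely many closed convex polyhedra (local regions) with pairwise disjoint interiors, and on each local region $u^*$ coincides with an affine function. (In the paper $u^*$ is the first input component of the explicit linear MPC optimal control law, which is continuous PWA.) Let $\ell_1,\dots,\ell_M$ be the distinct affine functions appearing as local pieces of $u^*$. A unique order (UO) region is a closed convex polyhedron contained in a local region such that, for all $a,b$, the order (sign of $\ell_a-\ell_b$) does not change in its interior; $\Omega$ is the union of finitely many UO regions. A sample point $\bm x_i\in\Omega$ lies in the interior of a UO region iff no two distinct functions among $\ell_1,\dots,\ell_M$ take the same value at $\bm x_i$; this UO region is denoted $\Gamma(\bm x_i)$. To each sample point $\bm x_i$ ($i=1,\dots,N_s$) is associated the affine function $u_i$ equal to the local piece of $u^*$ on $\Gamma(\bm x_i)$, so $u_i(\bm x)=u^*(\bm x)$ on $\Gamma(\bm x_i)$. Define $J_{\geq,i}=\{j\in\{1,\dots,N_s\}: u_j(\bm x_i)\ge u_i(\bm x_i)\}$, $J_{\leq,i}=\{j\in\{1,\dots,N_s\}: u_j(\bm x_i)\le u_i(\bm x_i)\}$, the disjunctive lattice PWA approximation $\hat f_{\mathrm{L,d}}(\bm x)=\max_{i=1,\dots,N_s}\min_{j\in J_{\geq,i}}u_j(\bm x)$ and the conjunctive lattice PWA approximation $\hat f_{\mathrm{L,c}}(\bm x)=\min_{i=1,\dots,N_s}\max_{j\in J_{\leq,i}}u_j(\bm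 x)$. *)

(* Defs.v *)
From HB Require Import structures.
From mathcomp Require Import all_boot all_order all_algebra.
From mathcomp Require Import reals.
Set Implicit Arguments. Unset Strict Implicit. Unset Printing Implicit Defensive.
Import Order.TTheory GRing.Theory Num.Theory.
Local Open Scope ring_scope.

Section Defs.
Variables (R : realType) (n : nat).

Definition pt := 'cV[R]_n.
Definition pset := pt -> Prop.

Definition affine := ('cV[R]_n * R)%type.
Definition aff_eval (l : affine) (x : pt) : R := (l.1^T *m x) 0 0 + l.2.

Definition is_polyhedron (S : pset) : Prop :=
  exists (m : nat) (A : 'M[R]_(m, n)) (c : 'cV[R]_m),
    forall x, S x <-> (forall r, (A *m x) r 0 <= c r 0).

Definition hyperbox (lo hi : pt) : pset :=
  fun x => forall j, lo j 0 <= x j 0 <= hi j 0.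

Definition interior (S : pset) : pset :=
  fun x => exists2 e : R, 0 < e &
    forall y : pt, (forall j, `|y j 0 - x j 0| < e) -> S y.

Definition is_PWA (Omega : pset) (ustar : pt -> R) (K : nat)
  (P : 'I_K -> pset) (L : 'I_K -> affine) : Prop :=
  [/\ forall k, is_polyhedron (P k),
      forall x, Omega x <-> (exists k, P k x),
      forall k k', k != k' -> forall x, ~ (interior (P k) x /\ interior (P k') x)
    & forall k x, P k x -> ustar x = aff_eval (L k) x].

Definition is_UO_region (K : nat) (P : 'I_K -> pset) (L : 'I_K -> affine)
  (G : pset) : Prop :=
  [/\ is_polyhedron G,
      exists k, forall x, G x -> P k x
    & forall (a b : 'I_K) (x y : pt), interior G x -> interior G y ->
        Num.sg (aff_eval (L a) x - aff_eval (L b) x) =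
        Num.sg (aff_eval (L a) y - aff_eval (L b) y)].

(* Minimum / maximum of a (nonempty) finite list of reals; the value on the
   empty list is an irrelevant default (the lists used below are never empty). *)
Definition minl (s : seq R) : R :=
  if s is a :: s' then foldr Num.min a s' else 0.
Definition maxl (s : seq R) : R :=
  if s is a :: s' then foldr Num.max a s' else 0.

Variables (N : nat) (xs : 'I_N -> pt) (u : 'I_N -> affine).

Definition J_ge (i : 'I_N) : seq 'I_N :=
  [seq j <- enum 'I_N | aff_eval (u i) (xs i) <= aff_eval (u j) (xs i)].
Definition J_le (i : 'I_N) : seq 'I_N :=
  [seq j <- enum 'I_N | aff_eval (u j) (xs i) <= aff_eval (u i) (xs i)].

Definition minJ_ge (i : 'I_N) (x : pt) : R := minl [seq aff_eval (u j) x | j <- J_ge i].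
Definition maxJ_le (i : 'I_N) (x : pt) : R := maxl [seq aff_eval (u j) x | j <- J_le i].

Definition fLd (x : pt) : R := maxl [seq minJ_ge i x | i <- enum 'I_N].
Definition fLc (x : pt) : R := minl [seq maxJ_le i x | i <- enum 'I_N].

End Defs.

(* Main.v *)
Require Import Defs.
From mathcomp Require Import all_boot all_order all_algebra.
From mathcomp Require Import reals.
From mathcomp Require Import ring lra.
Import Order.TTheory GRing.Theory Num.Theory.
Local Open Scope ring_scope.

Section Aux.
Variables (R : realType) (n : nat).

Lemma minl_le (s : seq R) v : v \in s -> minl s <= v.
Proof.
case: s => // a s; rewrite /=.
elim: s a v => [|b s IH] a v /=; first by rewrite inE => /eqP ->.
rewrite !inE => /or3P [/eqP ->|/eqP ->|vs].
- rewrite ge_min; apply/orP; right.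
  by apply: IH; rewrite inE eqxx.
- by rewrite ge_min lexx.
- rewrite ge_min; apply/orP; right. by apply: IH; rewrite inE vs orbT.
Qed.

Lemma minl_mem (s : seq R) : s != [::] -> minl s \in s.
Proof.
case: s => // a s _; rewrite /minl.
elim: s => [|b s IH]; first by rewrite inE.
change (foldr Num.min a (b :: s)) with (Num.min b (foldr Num.min a s)).
rewrite !inE.
rewrite [Num.min b _]/Order.min; case: ifP => _.
all: first [by rewrite eqxx orbT | by move: IH; rewrite inE => /orP [->|->]; rewrite ?orbT].
Qed.

Lemma maxl_ge (s : seq R) v : v \in s -> v <= maxl s.
Proof.
case: s => // a s; rewrite /=.
elim: s a v => [|b s IH] a v /=; first by rewrite inE => /eqP ->.
rewrite !inE => /or3P [/eqP ->|/eqP ->|vs].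
- rewrite le_max; apply/orP; right.
  by apply: IH; rewrite inE eqxx.
- by rewrite le_max lexx.
- rewrite le_max; apply/orP; right. by apply: IH; rewrite inE vs orbT.
Qed.

Lemma maxl_mem (s : seq R) : s != [::] -> maxl s \in s.
Proof.
case: s => // a s _; rewrite /maxl.
elim: s => [|b s IH]; first by rewrite inE.
change (foldr Num.max a (b :: s)) with (Num.max b (foldr Num.max a s)).
rewrite !inE.
rewrite [Num.max b _]/Order.max; case: ifP => _.
all: first [by rewrite eqxx orbT | by move: IH; rewrite inE => /orP [->|->]; rewrite ?orbT].
Qed.

Lemma aff_comb (l : affine R n) (x y : pt R n) (t : R) :
  aff_eval l (x + t *: (y - x)) = aff_eval l x + t * (aff_eval l y - aff_eval l x).
Proof.
rewrite /aff_eval mulmxDr -scalemxAr mulmxBr !mxE.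
ring.
Qed.

Lemma poly_conv (G : pset R n) x w t : is_polyhedron G -> G x -> G w ->
  0 <= t <= 1 -> G (x + t *: (w - x)).
Proof.
move=> [m [A [c HG]]] Gx Gw /andP [t0 t1].
apply/HG => r.
move/HG: Gx => /(_ r); move/HG: Gw => /(_ r).
rewrite mulmxDr -scalemxAr mulmxBr !mxE => h1 h2.
nra.
Qed.


Lemma interior_conv (G : pset R n) x p t : is_polyhedron G -> G x ->
  interior G p -> 0 < t <= 1 -> interior G (x + t *: (p - x)).
Proof.
move=> HG Gx [e e0 Hb] /andP [t0 t1].
exists (t * e); first exact: mulr_gt0.
move=> y hy.
set z := x + t *: (p - x).
set w := p + t^-1 *: (y - z).
have ->: y = x + t *: (w - x).
  apply/matrixP => j k; rewrite /w /z !mxE; field; exact: lt0r_neq0.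
apply: poly_conv => //; last by rewrite (ltW t0) t1.
apply: Hb => j.
rewrite /w !mxE addrAC subrr add0r normrM gtr0_norm ?invr_gt0 // mulrC.
rewrite ltr_pdivrMr //; have := hy j; rewrite !mxE [t * (_ - _)]mulrC [t * e]mulrC //.
Qed.

Lemma aff_ext (l1 l2 : affine R n) (p : pt R n) (e : R) : 0 < e ->
  (forall y : pt R n, (forall j, `|y j 0 - p j 0| < e) -> aff_eval l1 y = aff_eval l2 y) ->
  forall y, aff_eval l1 y = aff_eval l2 y.
Proof.
move=> e0 Hb y.
set M := \sum_j `|y j 0 - p j 0|.
have M0 : 0 <= M by apply: sumr_ge0 => j _.
have HM : forall j, `|y j 0 - p j 0| <= M.
  move=> j; rewrite /M (bigD1 j) //= lerDl; exact: sumr_ge0.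
set t := e / (M + 1).
have t0 : 0 < t by apply: divr_gt0 => //; rewrite ltr_wpDl.
have Hp : aff_eval l1 p = aff_eval l2 p.
  by apply: Hb => j; rewrite subrr normr0.
have Hz : aff_eval l1 (p + t *: (y - p)) = aff_eval l2 (p + t *: (y - p)).
  apply: Hb => j; rewrite !mxE addrAC subrr add0r normrM gtr0_norm //.
  apply: (le_lt_trans (y := t * M)); first by rewrite ler_pM2l.
  rewrite /t mulrAC ltr_pdivrMr ?ltr_wpDl //.
  rewrite ltr_pM2l // ltrDl //.
move: Hz; rewrite !aff_comb Hp => /addrI /mulfI.
move=> /(_ (lt0r_neq0 t0)) /(congr1 (fun v => v + aff_eval l2 p)).
by rewrite !subrK.
Qed.


Lemma order_pres (G : pset R n) (La Lb : affine R n) p x :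
  is_polyhedron G -> interior G p -> G x ->
  (forall y z, interior G y -> interior G z ->
     Num.sg (aff_eval Lb y - aff_eval La y) = Num.sg (aff_eval Lb z - aff_eval La z)) ->
  aff_eval La p <= aff_eval Lb p -> aff_eval La x <= aff_eval Lb x.
Proof.
move=> HG Ip Gx Hsg hp.
rewrite leNgt; apply/negP => hx.
set gx := aff_eval Lb x - aff_eval La x.
set gp := aff_eval Lb p - aff_eval La p.
have gx0 : gx < 0 by rewrite /gx subr_lt0.
have gp0 : 0 <= gp by rewrite /gp subr_ge0.
have d0 : 0 < gp - gx by lra.
set t := - gx / (2 * (gp - gx)).
have t0 : 0 < t by rewrite /t divr_gt0 ?oppr_gt0 // mulr_gt0.
have t1 : t <= 1.
  rewrite /t ler_pdivrMr ?mulr_gt0 //; lra.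
have Iz := @interior_conv G x p t HG Gx Ip.
rewrite t0 t1 in Iz; have {}Iz := Iz isT.
have := Hsg _ _ Iz Ip.
rewrite !aff_comb -/gp.
have -> : aff_eval Lb x + t * (aff_eval Lb p - aff_eval Lb x) -
    (aff_eval La x + t * (aff_eval La p - aff_eval La x)) = gx / 2.
  rewrite /t /gx /gp; field.
  by move: d0; rewrite lt0r => /andP [].
move=> h.
have : 0 <= Num.sg (gx / 2) by rewrite h sgr_ge0.
by rewrite sgr_ge0 pmulr_lge0 ?invr_gt0 // leNgt gx0.
Qed.

End Aux.

Lemma nonnil_map (T : eqType) (S : eqType) (f : T -> S) (s : seq T) a :
  a \in s -> [seq f y | y <- s] != [::].
Proof. by case: s. Qed.

Theorem mainTheorem1 (R : realType) (n : nat) (lo hi : 'cV[R]_n)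
  (ustar : 'cV[R]_n -> R) (K : nat) (P : 'I_K -> pset R n) (L : 'I_K -> affine R n)
  (N1 : nat) (xs : 'I_N1 -> 'cV[R]_n) (Gam : 'I_N1 -> pset R n)
  (u : 'I_N1 -> affine R n) :
  is_PWA (hyperbox lo hi) ustar P L ->
  (forall i, hyperbox lo hi (xs i)) ->
  (forall i, is_UO_region P L (Gam i)) ->
  (forall i, interior (Gam i) (xs i)) ->
  (forall i x, Gam i x -> aff_eval (u i) x = ustar x) ->
  (forall i k, minJ_ge xs u i (xs k) <= aff_eval (u k) (xs k) /\
               aff_eval (u k) (xs k) <= maxJ_le xs u i (xs k)) ->
  forall i x, Gam i x -> fLd xs u x = ustar x /\ fLc xs u x = ustar x.
Proof.
move=> [_ _ _ HL] _ HUO Hint Hu Hmk i x Gx.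
have Hk : forall j, exists k, forall y, aff_eval (u j) y = aff_eval (L k) y.
  move=> j; case: (HUO j) => _ [k Hk] _; exists k.
  case: (Hint j) => e e0 Hb.
  apply: (@aff_ext R n (u j) (L k) (xs j) e e0) => y hy.
  have Gy := Hb y hy.
  by rewrite Hu // (HL k) //; apply: Hk.
have Hcmp : forall a b, aff_eval (u a) (xs i) <= aff_eval (u b) (xs i) ->
    aff_eval (u a) x <= aff_eval (u b) x.
  move=> a b; case: (Hk a) => ka Ha; case: (Hk b) => kb Hb'.
  rewrite !Ha !Hb'.
  case: (HUO i) => Hpol _ Hsg.
  apply: (@order_pres R n (Gam i) (L ka) (L kb) (xs i) x Hpol (Hint i) Gx).
  by move=> y z Iy Iz; apply: Hsg.
have iN : i \in enum 'I_N1 by rewrite mem_enum.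
have Jge : forall k, k \in J_ge xs u k by move=> k; rewrite mem_filter lexx mem_enum.
have Jle : forall k, k \in J_le xs u k by move=> k; rewrite mem_filter lexx mem_enum.
rewrite -(Hu i x Gx); split; apply/eqP; rewrite eq_le; apply/andP; split.
- have : fLd xs u x \in [seq minJ_ge xs u k x | k <- enum 'I_N1].
    by apply: maxl_mem; move: iN; case: (enum 'I_N1).
  case/mapP => k _ ->.
  have [h _] := Hmk k i.
  have : minJ_ge xs u k (xs i) \in [seq aff_eval (u j) (xs i) | j <- J_ge xs u k].
    by apply: minl_mem; move: (Jge k); case: (J_ge xs u k).
  case/mapP => j jJ hj.
  apply: (le_trans (y := aff_eval (u j) x)).
    by apply: minl_le; apply: map_f.
  by apply: Hcmp; rewrite -hj.
- apply: (le_trans (y := minJ_ge xs u i x)); last by apply: maxl_ge; apply: map_f.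
  have : minJ_ge xs u i x \in [seq aff_eval (u j) x | j <- J_ge xs u i].
    by apply: minl_mem; move: (Jge i); case: (J_ge xs u i).
  case/mapP => j jJ ->.
  apply: Hcmp; move: jJ; rewrite mem_filter => /andP [] //.
- apply: (le_trans (y := maxJ_le xs u i x)); first by apply: minl_le; apply: map_f.
  have : maxJ_le xs u i x \in [seq aff_eval (u j) x | j <- J_le xs u i].
    by apply: maxl_mem; move: (Jle i); case: (J_le xs u i).
  case/mapP => j jJ ->.
  apply: Hcmp; move: jJ; rewrite mem_filter => /andP [] //.
- have : fLc xs u x \in [seq maxJ_le xs u k x | k <- enum 'I_N1].
    by apply: minl_mem; move: iN; case: (enum 'I_N1).
  case/mapP => k _ ->.
  have [_ h] := Hmk k i.
  have : maxJ_le xs u k (xs i) \in [seq aff_eval (u j) (xs i) | j <- J_le xs u k].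
    by apply: maxl_mem; move: (Jle k); case: (J_le xs u k).
  case/mapP => j jJ hj.
  apply: (le_trans (y := aff_eval (u j) x)).
    by apply: Hcmp; rewrite -hj.
  by apply: maxl_ge; apply: map_f.
Qed.
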